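(* Let $K$ be a field, $\boldsymbol{\lambda}=(\lambda_1,\dots,\lambda_n)$ a vector of positive integers, and $M(\boldsymbol{\lambda})$ the monoid defined below. Then $I(\boldsymbol{\lambda})\subseteq K[x_1,\dots,x_n]$ is normal if and only if every minimal generator of $M(\boldsymbol{\lambda})$ of type (3) or (4) has $d=1$.
   Context: $I(\boldsymbol{\lambda})$ is the integral closure in $R=K[x_1,\dots,x_n]$ of $(x_1^{\lambda_1},\dots,x_n^{\lambda_n})$; an ideal is normal if all its positive powers are integrally closed. Let $M(\boldsymbol{\lambda})=\{(a_1,\dots,a_n,d)\in\mathbb{N}^{n+1}\mid a_1/\lambda_1+\cdots+a_n/\lambda_n\ge d\}$ (the exponent monoid of the integral closure of the Rees algebra $R[I(\boldsymbol{\lambda})t]$ in $R[t]$). A minimal generator of $M(\boldsymbol{\lambda})$ is a nonzero element that cannot be written as the sum of two nonzero elements of $M(\boldsymbol{\lambda})$. A minimal generator $(a_1,\dots,a_n,d)$ is of type (3) if $a_n=0$, $d>0$ and $a_ia_j>0$ for some $1\le i<j<n$; it is of type (4) if $d>0$ and $a_ia_n>0$ for some $1\le i<n$. *)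

(* Defs.v *)
From HB Require Import structures.
From mathcomp Require Import all_boot all_order all_algebra.
From mathcomp Require Import mpoly.
Set Implicit Arguments. Unset Strict Implicit. Unset Printing Implicit Defensive.
Import Order.TTheory GRing.Theory Num.Theory.
Local Open Scope ring_scope.

Definition gen_ideal (R : comNzRingType) (S : R -> Prop) : R -> Prop :=
  fun f => exists s : seq (R * R),
    (forall p, p \in s -> S p.2) /\ f = \sum_(p <- s) p.1 * p.2.

Definition ideal_pow (R : comNzRingType) (I : R -> Prop) (k : nat) : R -> Prop :=
  gen_ideal (fun g => exists s : seq R,
    size s = k /\ (forall x, x \in s -> I x) /\ g = \prod_(x <- s) x).

Definition int_closure (R : comNzRingType) (I : R -> Prop) : R -> Prop :=
  fun f => exists (m : nat) (a : nat -> R),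
    (0 < m)%N /\ (forall i, (1 <= i <= m)%N -> ideal_pow I i (a i)) /\
    f ^+ m + \sum_(1 <= i < m.+1) a i * f ^+ (m - i) = 0.

Definition integrally_closed (R : comNzRingType) (I : R -> Prop) : Prop :=
  forall f, int_closure I f -> I f.

Definition normal_ideal (R : comNzRingType) (I : R -> Prop) : Prop :=
  forall k, (0 < k)%N -> integrally_closed (ideal_pow I k).

Definition Ilam (K : fieldType) (n : nat) (lam : 'I_n -> nat) : {mpoly K[n]} -> Prop :=
  @int_closure _ (gen_ideal (fun g : {mpoly K[n]} => exists i : 'I_n, g = 'X_i ^+ lam i)).

(* Elements (a_1,...,a_n,d) of N^(n+1). *)
Definition vecN (n : nat) := ({ffun 'I_n -> nat} * nat)%type.
Arguments Ilam K {n} lam.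


Definition inM (n : nat) (lam : 'I_n -> nat) (v : vecN n) : Prop :=
  (v.2%:R <= \sum_(i < n) (v.1 i)%:R / (lam i)%:R :> rat).

Definition vadd (n : nat) (u v : vecN n) : vecN n :=
  ([ffun i => u.1 i + v.1 i]%N, (u.2 + v.2)%N).

Definition vzero (n : nat) : vecN n := ([ffun=> 0%N], 0%N).

Definition min_gen (n : nat) (lam : 'I_n -> nat) (v : vecN n) : Prop :=
  inM lam v /\ v <> vzero n /\
  ~ (exists u w : vecN n, inM lam u /\ inM lam w /\ u <> vzero n /\
       w <> vzero n /\ v = vadd u w).

(* Type (3): a_n = 0, d > 0, a_i a_j > 0 for some 1 <= i < j < n.
   (Indices are 0-based: the last coordinate a_n is the one of index n-1.) *)
Definition type3 (n : nat) (v : vecN n) : Prop :=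
  (exists k : 'I_n, val k = n.-1 /\ v.1 k = 0%N) /\ (0 < v.2)%N /\
  exists i j : 'I_n, (val i < val j)%N /\ (val j < n.-1)%N /\ (0 < v.1 i * v.1 j)%N.

Definition type4 (n : nat) (v : vecN n) : Prop :=
  (0 < v.2)%N /\
  exists i k : 'I_n, val k = n.-1 /\ (val i < val k)%N /\ (0 < v.1 i * v.1 k)%N.

(* Main.v *)
Require Import Defs.
From HB Require Import structures.
From mathcomp Require Import all_boot all_order all_algebra.
From mathcomp Require Import mpoly.
From Stdlib Require Import Classical.
From mathcomp Require Import zify.
Set Implicit Arguments. Unset Strict Implicit. Unset Printing Implicit Defensive.
Import Order.TTheory GRing.Theory Num.Theory.
Local Open Scope ring_scope.

Definition prodset (R : comNzRingType) (J : R -> Prop) (k : nat) : R -> Prop :=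
  fun g => exists s : seq R,
    size s = k /\ (forall x, x \in s -> J x) /\ g = \prod_(x <- s) x.

Lemma gen_ideal_ind (R : comNzRingType) (S P : R -> Prop) :
  P 0 -> (forall x y, P x -> P y -> P (x + y)) ->
  (forall r x, S x -> P (r * x)) -> forall f, gen_ideal S f -> P f.
Proof.
move=> P0 PD PM f [s [Hs ->]]; elim: s Hs => [|[r x] s IH] Hs.
  by rewrite big_nil.
rewrite big_cons; apply: PD; first by apply: PM; apply: (Hs (r, x)); rewrite inE eqxx.
by apply: IH => p ps; apply: Hs; rewrite inE ps orbT.
Qed.

Lemma gen_ideal0 (R : comNzRingType) (S : R -> Prop) : gen_ideal S 0.
Proof. by exists [::]; rewrite big_nil. Qed.

Lemma gen_idealD (R : comNzRingType) (S : R -> Prop) x y :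
  gen_ideal S x -> gen_ideal S y -> gen_ideal S (x + y).
Proof.
move=> [s [Hs ->]] [t [Ht ->]]; exists (s ++ t); split; last by rewrite big_cat.
by move=> p; rewrite mem_cat => /orP [/Hs|/Ht].
Qed.

Lemma gen_idealMl (R : comNzRingType) (S : R -> Prop) r x :
  S x -> gen_ideal S (r * x).
Proof.
by move=> Sx; exists [:: (r, x)]; split; [move=> p; rewrite inE => /eqP -> | rewrite big_seq1].
Qed.

Lemma gen_idealS (R : comNzRingType) (S : R -> Prop) x : S x -> gen_ideal S x.
Proof. by move=> Sx; rewrite -[x]mul1r; apply: gen_idealMl. Qed.

Lemma gen_idealM (R : comNzRingType) (S : R -> Prop) r x :
  gen_ideal S x -> gen_ideal S (r * x).
Proof.
move=> [s [Hs ->]]; exists (map (fun p => (r * p.1, p.2)) s); split.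
  by move=> p /mapP [q qs ->] /=; apply: Hs.
by rewrite big_map mulr_sumr; apply: eq_bigr => p _; rewrite mulrA.
Qed.

Lemma gen_idealN (R : comNzRingType) (S : R -> Prop) x :
  gen_ideal S x -> gen_ideal S (- x).
Proof. by move=> H; rewrite -mulN1r; apply: gen_idealM. Qed.

Lemma gen_ideal_sum (R : comNzRingType) (S : R -> Prop) (I : Type) (r : seq I) (F : I -> R) :
  (forall i, gen_ideal S (F i)) -> gen_ideal S (\sum_(i <- r) F i).
Proof.
move=> H; elim: r => [|i r IH]; first by rewrite big_nil; apply: gen_ideal0.
by rewrite big_cons; apply: gen_idealD.
Qed.

Lemma gen_ideal_mono (R : comNzRingType) (S T : R -> Prop) :
  (forall x, S x -> T x) -> forall x, gen_ideal S x -> gen_ideal T x.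
Proof.
move=> ST x [s [Hs ->]]; exists s; split => // p /Hs; apply: ST.
Qed.

Lemma gen_ideal_idem (R : comNzRingType) (S : R -> Prop) x :
  gen_ideal (gen_ideal S) x -> gen_ideal S x.
Proof.
apply: gen_ideal_ind; [exact: gen_ideal0 | exact: gen_idealD | ].
by move=> r y Hy; apply: gen_idealM.
Qed.

Lemma prodset_mono (R : comNzRingType) (S T : R -> Prop) k :
  (forall x, S x -> T x) -> forall x, prodset S k x -> prodset T k x.
Proof. by move=> ST x [s [Hs [Hin ->]]]; exists s; split => //; split => // y /Hin /ST. Qed.

Lemma ideal_pow_mono (R : comNzRingType) (S T : R -> Prop) k :
  (forall x, S x -> T x) -> forall x, ideal_pow S k x -> ideal_pow T k x.
Proof. move=> ST; apply: gen_ideal_mono; exact: prodset_mono. Qed.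

Lemma ideal_pow1_gen (R : comNzRingType) (S : R -> Prop) x :
  ideal_pow (gen_ideal S) 1 x -> gen_ideal S x.
Proof.
apply: gen_ideal_ind; [exact: gen_ideal0 | exact: gen_idealD | ].
move=> r y [[|z [|? ?]] [//= _ [Hin ->]]]; rewrite big_seq1.
by apply: gen_idealM; apply: Hin; rewrite inE.
Qed.

Lemma prodset_regroup (R : comNzRingType) (J : R -> Prop) d N x :
  prodset J (d * N) x -> prodset (prodset J d) N x.
Proof.
elim: N x => [|N IH] x [s [Hs [Hin ->]]].
  by exists [::]; move: Hs; rewrite muln0 => /size0nil ->; rewrite !big_nil.
have Hd : (d <= size s)%N by rewrite Hs mulnS leq_addr.
rewrite -(cat_take_drop d s) big_cat /=.
have [t [Ht [Htin ->]]] : prodset (prodset J d) N (\prod_(y <- drop d s) y).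
  apply: IH; exists (drop d s); split => //; last by split => // y /mem_drop /Hin.
  by rewrite size_drop Hs mulnS addKn.
exists ((\prod_(y <- take d s) y) :: t); split; first by rewrite /= Ht.
split; last by rewrite big_cons.
move=> y; rewrite inE => /orP [/eqP ->|/Htin //].
exists (take d s); split; first by rewrite size_take_min; apply/minn_idPl.
by split => // z /mem_take /Hin.
Qed.

Definition wL (n : nat) (lam : 'I_n -> nat) : nat := (\prod_(j < n) lam j)%N.
Definition ww (n : nat) (lam : 'I_n -> nat) (i : 'I_n) : nat :=
  (\prod_(j < n | j != i) lam j)%N.
Definition wtf (n : nat) (lam : 'I_n -> nat) (a : 'I_n -> nat) : nat :=
  (\sum_(i < n) a i * ww lam i)%N.

Lemma lam_ww n (lam : 'I_n -> nat) i : (lam i * ww lam i)%N = wL lam.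
Proof. by rewrite /wL (bigD1 i). Qed.

Lemma wtfD n (lam : 'I_n -> nat) a b :
  wtf lam (fun i => a i + b i)%N = (wtf lam a + wtf lam b)%N.
Proof. by rewrite /wtf -big_split; apply: eq_bigr => i _; rewrite mulnDl. Qed.

Definition hX (K : fieldType) n (lam : 'I_n -> nat) (i : 'I_n) : {poly {mpoly K[n]}} :=
  ('X_i)%:P * 'X^(ww lam i).

Definition phi (K : fieldType) n (lam : 'I_n -> nat) (p : {mpoly K[n]}) : {poly {mpoly K[n]}} :=
  mmap (polyC \o (@mpolyC n K)) (hX K lam) p.

Lemma phiD (K : fieldType) n (lam : 'I_n -> nat) (p q : {mpoly K[n]}) : phi lam (p + q) = phi lam p + phi lam q.
Proof. by rewrite /phi rmorphD. Qed.
Lemma phiM (K : fieldType) n (lam : 'I_n -> nat) (p q : {mpoly K[n]}) : phi lam (p * q) = phi lam p * phi lam q.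
Proof. by rewrite /phi rmorphM. Qed.
Lemma phiN (K : fieldType) n (lam : 'I_n -> nat) (p : {mpoly K[n]}) : phi lam (- p) = - phi lam p.
Proof. by rewrite /phi rmorphN. Qed.
Lemma phi0 (K : fieldType) n (lam : 'I_n -> nat) : phi lam (0 : {mpoly K[n]}) = 0.
Proof. by rewrite /phi rmorph0. Qed.
Lemma phiX (K : fieldType) n (lam : 'I_n -> nat) (p : {mpoly K[n]}) k : phi lam (p ^+ k) = phi lam p ^+ k.
Proof. by rewrite /phi rmorphXn. Qed.

Definition wtm n (lam : 'I_n -> nat) (m : 'X_{1..n}) : nat := wtf lam (fun i => m i).

Lemma phi_mX (K : fieldType) n (lam : 'I_n -> nat) (m : 'X_{1..n}) :
  phi lam ('X_[m] : {mpoly K[n]}) = ('X_[m])%:P * 'X^(wtm lam m).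
Proof.
rewrite /phi mmapX /mmap1 /hX.
rewrite (eq_bigr (fun i => ('X_i ^+ m i)%:P * 'X^(ww lam i * m i)%N)); last first.
  by move=> i _; rewrite exprMn rmorphXn /= exprM.
rewrite big_split /= -rmorph_prod -mpolyXE_id prodrXr; congr (_ * 'X^_).
by rewrite /wtm /wtf; apply: eq_bigr => i _; rewrite mulnC.
Qed.

Lemma phiE (K : fieldType) n (lam : 'I_n -> nat) (p : {mpoly K[n]}) :
  phi lam p = \sum_(m <- msupp p) (p@_m *: 'X_[m])%:P * 'X^(wtm lam m).
Proof.
rewrite {1}/phi /mmap; apply: eq_bigr => m _.
have := phi_mX K lam m; rewrite {1}/phi mmapX => ->.
by rewrite /= mulrA -polyCM mul_mpolyC.
Qed.

Definition good (K : fieldType) n (lam : 'I_n -> nat) (t : nat) (p : {mpoly K[n]}) :=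
  exists Q, phi lam p = 'X^t * Q.

Lemma good_supp (K : fieldType) n (lam : 'I_n -> nat) t (p : {mpoly K[n]}) m0 :
  good lam t p -> m0 \in msupp p -> (t <= wtm lam m0)%N.
Proof.
move=> [Q HQ] Hm0; rewrite leqNgt; apply/negP => Hlt.
have := congr1 (fun P : {poly {mpoly K[n]}} => (P`_(wtm lam m0))@_m0) HQ.
rewrite /= coefXnM Hlt mcoeff0 phiE coef_sum.
rewrite (bigD1_seq m0) //= ?msupp_uniq // coefCM coefXn eqxx mulr1.
rewrite mcoeffD mcoeffZ mcoeffX eqxx mulr1 (raddf_sum (mcoeff m0)) /=.
rewrite big1_seq ?addr0; last first.
  move=> m /andP [Hne _]; rewrite coefCM coefXn.
  case: (_ == _); rewrite ?mulr0 ?mulr1 ?mcoeff0 //.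
  by rewrite mcoeffZ mcoeffX (negbTE Hne) mulr0.
by move/eqP; rewrite mcoeff_eq0 Hm0.
Qed.

Lemma good0 (K : fieldType) n (lam : 'I_n -> nat) t : good lam t (0 : {mpoly K[n]}).
Proof. by exists 0; rewrite phi0 mulr0. Qed.

Lemma goodD (K : fieldType) n (lam : 'I_n -> nat) t (p q : {mpoly K[n]}) :
  good lam t p -> good lam t q -> good lam t (p + q).
Proof. by move=> [P HP] [Q HQ]; exists (P + Q); rewrite phiD HP HQ mulrDr. Qed.

Lemma goodN (K : fieldType) n (lam : 'I_n -> nat) t (p : {mpoly K[n]}) :
  good lam t p -> good lam t (- p).
Proof. by move=> [P HP]; exists (- P); rewrite phiN HP mulrN. Qed.

Lemma goodM (K : fieldType) n (lam : 'I_n -> nat) t u (p q : {mpoly K[n]}) :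
  good lam t p -> good lam u q -> good lam (t + u) (p * q).
Proof.
move=> [P HP] [Q HQ]; exists (P * Q); rewrite phiM HP HQ exprD.
by rewrite mulrA -(mulrA _ P) (mulrC P) !mulrA.
Qed.

Lemma good_any (K : fieldType) n (lam : 'I_n -> nat) (p : {mpoly K[n]}) :
  good lam 0 p.
Proof. by exists (phi lam p); rewrite expr0 mul1r. Qed.

Lemma goodMl (K : fieldType) n (lam : 'I_n -> nat) t (r p : {mpoly K[n]}) :
  good lam t p -> good lam t (r * p).
Proof. by move=> H; have := goodM (good_any lam r) H; rewrite add0n. Qed.

Lemma good_le (K : fieldType) n (lam : 'I_n -> nat) t u (p : {mpoly K[n]}) :
  (u <= t)%N -> good lam t p -> good lam u p.
Proof.
move=> ut [P HP]; exists ('X^(t - u) * P); rewrite HP mulrA -exprD subnKC //.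
Qed.

Lemma goodX (K : fieldType) n (lam : 'I_n -> nat) t (p : {mpoly K[n]}) k :
  good lam t p -> good lam (k * t) (p ^+ k).
Proof.
move=> H; elim: k => [|k IH]; first by rewrite mul0n; apply: good_any.
by rewrite exprS mulSn; apply: goodM.
Qed.

Lemma good_gen_ideal (K : fieldType) n (lam : 'I_n -> nat) t (S : {mpoly K[n]} -> Prop) f :
  (forall x, S x -> good lam t x) -> gen_ideal S f -> good lam t f.
Proof.
move=> HS; apply: gen_ideal_ind; [exact: good0 | exact: goodD |].
by move=> r x /HS; apply: goodMl.
Qed.

Lemma good_prodset (K : fieldType) n (lam : 'I_n -> nat) t (J : {mpoly K[n]} -> Prop) k f :
  (forall x, J x -> good lam t x) -> prodset J k f -> good lam (k * t) f.
Proof.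
move=> HJ [s [<- [Hin ->]]]; elim: s Hin => [|x s IH] Hin.
  by rewrite mul0n; apply: good_any.
rewrite big_cons /= mulSn; apply: goodM; first by apply: HJ; apply: Hin; rewrite inE eqxx.
by apply: IH => y ys; apply: Hin; rewrite inE ys orbT.
Qed.

Lemma good_ideal_pow (K : fieldType) n (lam : 'I_n -> nat) t (J : {mpoly K[n]} -> Prop) k f :
  (forall x, J x -> good lam t x) -> ideal_pow J k f -> good lam (k * t) f.
Proof. by move=> HJ; apply: good_gen_ideal => x; apply: good_prodset. Qed.

Lemma good_sum (K : fieldType) n (lam : 'I_n -> nat) t (I : eqType) (r : seq I) (F : I -> {mpoly K[n]}) :
  (forall i, i \in r -> good lam t (F i)) -> good lam t (\sum_(i <- r) F i).
Proof.
elim: r => [|i r IH] H; first by rewrite big_nil; apply: good0.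
rewrite big_cons; apply: goodD; first by apply: H; rewrite inE eqxx.
by apply: IH => j jr; apply: H; rewrite inE jr orbT.
Qed.

Lemma good_int_closure (K : fieldType) n (lam : 'I_n -> nat) t (J : {mpoly K[n]} -> Prop) f :
  (forall i x, (1 <= i)%N -> ideal_pow J i x -> good lam (i * t) x) ->
  int_closure J f -> good lam t f.
Proof.
move=> HJ [m [a [m0 [Ha Heq]]]].
suff H : forall e, (e <= t)%N -> good lam e f by apply: H.
elim=> [|e IH] het; first exact: good_any.
have [Q HQ] := IH (ltnW het).
have Hsum : good lam (m * e).+1 (\sum_(1 <= i < m.+1) a i * f ^+ (m - i)).
  apply: good_sum => i; rewrite mem_index_iota => /andP [i1 im].
  have Hme : (m * e).+1 = ((i * e).+1 + (m - i) * e)%N.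
    by rewrite addSn -mulnDl subnKC.
  rewrite Hme; apply: goodM; last by apply: goodX; exists Q.
  apply: (@good_le _ _ _ (i * t)); last by apply: HJ => //; apply: Ha; rewrite i1.
  apply: leq_trans (leq_mul (leqnn i) het); rewrite mulnS addnC -addn1 leq_add2l //.
have Hfm : good lam (m * e).+1 (f ^+ m).
  have -> : f ^+ m = - (\sum_(1 <= i < m.+1) a i * f ^+ (m - i)).
    by apply/eqP; rewrite -addr_eq0 Heq.
  exact: goodN.
have [S HS] := Hfm.
move: HS; rewrite phiX HQ exprMn -exprM mulnC exprS (mulrC 'X) -mulrA => HS.
have {}HS : Q ^+ m = 'X * S.
  apply: (mulfI (x := 'X^(m * e))); last by rewrite HS.
  by rewrite expf_neq0 // polyX_eq0.
have : root Q 0.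
  have := congr1 (fun P => P.[0]) HS; rewrite /= horner_exp hornerM hornerX mul0r.
  by move/eqP; rewrite expf_eq0 => /andP [_].
move/factor_theorem => [q Hq]; exists q.
by rewrite HQ Hq subr0 exprSr -mulrA (mulrC q).
Qed.

Definition Gens (K : fieldType) n (lam : 'I_n -> nat) : {mpoly K[n]} -> Prop :=
  fun g => exists i : 'I_n, g = 'X_i ^+ lam i.

Lemma wtm_U n (lam : 'I_n -> nat) (i : 'I_n) k : wtm lam (U_(i) *+ k)%MM = (k * ww lam i)%N.
Proof.
rewrite /wtm /wtf (bigD1 i) //= mulmnE mnm1E eqxx mul1n big1 ?addn0 //.
by move=> j /negbTE ji; rewrite mulmnE mnm1E eq_sym ji.
Qed.

Lemma good_gen (K : fieldType) n (lam : 'I_n -> nat) (i : 'I_n) :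
  good lam (wL lam) ('X_i ^+ lam i : {mpoly K[n]}).
Proof.
exists ('X_[U_(i) *+ lam i])%:P.
by rewrite mpolyXn phi_mX wtm_U lam_ww mulrC.
Qed.

Lemma good_Ilam (K : fieldType) n (lam : 'I_n -> nat) f :
  Ilam K lam f -> good lam (wL lam) f.
Proof.
apply: good_int_closure => i x _; apply: good_ideal_pow => y.
by apply: good_gen_ideal => g [j ->]; apply: good_gen.
Qed.

Lemma prodset_cat (R : comNzRingType) (J : R -> Prop) a b x y :
  prodset J a x -> prodset J b y -> prodset J (a + b) (x * y).
Proof.
move=> [s [<- [Hs ->]]] [t [<- [Ht ->]]]; exists (s ++ t); rewrite size_cat big_cat.
by split => //; split => // z; rewrite mem_cat => /orP [/Hs|/Ht].
Qed.

Lemma prodset_split (R : comNzRingType) (J : R -> Prop) a b x :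
  prodset J (a + b) x -> exists x1 x2, [/\ x = x1 * x2, prodset J a x1 & prodset J b x2].
Proof.
move=> [s [Hs [Hin ->]]]; exists (\prod_(y <- take a s) y), (\prod_(y <- drop a s) y).
split; first by rewrite -big_cat cat_take_drop.
  exists (take a s); split; first by rewrite size_take_min Hs; apply/minn_idPl; rewrite leq_addr.
  by split => // z /mem_take /Hin.
exists (drop a s); split; first by rewrite size_drop Hs addKn.
by split => // z /mem_drop /Hin.
Qed.

Lemma prodset_mX (K : fieldType) n (lam : 'I_n -> nat) (J : {mpoly K[n]} -> Prop) (m : 'X_{1..n}) :
  (forall i, J ('X_i ^+ lam i)) -> prodset J (wtm lam m) 'X_[m *+ wL lam].
Proof.
move=> HJ; rewrite mpolyXE_id /wtm /wtf.
rewrite (eq_bigr (fun i => ('X_i ^+ lam i) ^+ (m i * ww lam i)%N)); last first.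
  by move=> i _; rewrite mulmnE -exprM -(lam_ww lam i) mulnCA.
elim/big_rec2: _ => [|i k x _ Hx]; first by exists [::]; rewrite big_nil.
apply: prodset_cat => //; elim: (m i * ww lam i)%N => [|k' IH].
  by exists [::]; rewrite big_nil expr0.
rewrite exprS -add1n; apply: prodset_cat => //.
by exists [:: 'X_i ^+ lam i]; rewrite big_seq1; split => //; split => // z; rewrite inE => /eqP ->.
Qed.

Lemma mono_int_closure (K : fieldType) n (lam : 'I_n -> nat) (J : {mpoly K[n]} -> Prop) d (m : 'X_{1..n}) :
  (0 < wL lam)%N -> (forall i, J ('X_i ^+ lam i)) -> (d * wL lam <= wtm lam m)%N ->
  int_closure (ideal_pow J d) 'X_[m].
Proof.
move=> L0 HJ Hd.
have Hmem : ideal_pow (ideal_pow J d) (wL lam) ('X_[m] ^+ wL lam).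
  have := prodset_mX m HJ; rewrite mpolyXn -(subnKC Hd).
  move=> /prodset_split [x1 [x2 [-> H1 H2]]]; rewrite mulrC; apply: gen_idealMl.
  apply: prodset_mono (prodset_regroup H1) => y Hy; exact: gen_idealS.
exists (wL lam), (fun i => if i == wL lam then - 'X_[m] ^+ wL lam else 0); split => //; split.
  move=> i _; case: eqP => [->|_]; [exact: gen_idealN | exact: gen_ideal0].
rewrite big_nat_recr //= eqxx subnn expr0 mulr1 big1_seq ?add0r ?addrN //.
move=> i; rewrite mem_index_iota => /and3P [_ _ Hi]; by rewrite (ltn_eqF Hi) mul0r.
Qed.

Lemma int_closure_mono (R : comNzRingType) (J1 J2 : R -> Prop) f :
  (forall x, J1 x -> J2 x) -> int_closure J1 f -> int_closure J2 f.
Proof.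
move=> H [m [a [m0 [Ha Heq]]]]; exists m, a; split => //; split => // i Hi.
by apply: ideal_pow_mono (Ha i Hi).
Qed.

Lemma mono_Ilam (K : fieldType) n (lam : 'I_n -> nat) (m : 'X_{1..n}) :
  (0 < wL lam)%N -> (wL lam <= wtm lam m)%N -> Ilam K lam 'X_[m].
Proof.
move=> L0 Hm; rewrite /Ilam.
have H1 := @mono_int_closure _ _ lam (gen_ideal (@Gens K n lam)) 1 m L0.
have H2 := @int_closure_mono _ (ideal_pow (gen_ideal (@Gens K n lam)) 1) (gen_ideal (@Gens K n lam)) 'X_[m] (@ideal_pow1_gen _ _).
apply: H2; apply: H1; last by rewrite mul1n.
by move=> i; apply: gen_idealS; exists i.
Qed.


Lemma gen_Ilam (K : fieldType) n (lam : 'I_n -> nat) (i : 'I_n) :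
  (0 < wL lam)%N -> Ilam K lam ('X_i ^+ lam i).
Proof.
move=> L0; rewrite mpolyXn; apply: mono_Ilam => //.
by rewrite wtm_U lam_ww.
Qed.

Definition decomp n (lam : 'I_n -> nat) (d : nat) (m : 'X_{1..n}) :=
  exists (c : 'X_{1..n}) (bs : seq 'X_{1..n}),
    [/\ size bs = d, (forall b, b \in bs -> (wL lam <= wtm lam b)%N) &
        forall i, m i = (c i + \sum_(b <- bs) b i)%N].

Lemma supp_prod (K : fieldType) n (lam : 'I_n -> nat) (s : seq {mpoly K[n]}) :
  (forall y, y \in s -> forall m, m \in msupp y -> (wL lam <= wtm lam m)%N) ->
  forall m, m \in msupp (\prod_(y <- s) y) -> decomp lam (size s) m.
Proof.
elim: s => [|y s IH] Hs m.
  rewrite big_nil msupp1 inE => /eqP ->; exists 0%MM, [::]; split => // i.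
  by rewrite big_nil mnm0E.
rewrite big_cons => /msuppM_le /allpairsP [[m1 m2] /= [H1 H2 ->]].
have [c [bs [Hsz Hbs Hm2]]] := IH (fun z zs => Hs z (@mem_behead _ (y :: s) z zs)) m2 H2.
exists c, (m1 :: bs); split; first by rewrite /= Hsz.
  move=> b; rewrite inE => /orP [/eqP ->|/Hbs //].
  by apply: (Hs y); rewrite ?inE ?eqxx.
by move=> i; rewrite mnmDE Hm2 big_cons addnCA.
Qed.

Lemma supp_ideal_pow (K : fieldType) n (lam : 'I_n -> nat) (J : {mpoly K[n]} -> Prop) d x :
  (forall y, J y -> forall m, m \in msupp y -> (wL lam <= wtm lam m)%N) ->
  ideal_pow J d x -> forall m, m \in msupp x -> decomp lam d m.
Proof.
move=> HJ; move: x.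
apply: (@gen_ideal_ind _ (prodset J d) (fun x => forall m, m \in msupp x -> decomp lam d m)).
- by move=> m; rewrite -[_ \in _]negbK -mcoeff_eq0 mcoeff0 eqxx.
- move=> x1 x2 H1 H2 m /msuppD_le; rewrite mem_cat => /orP [/H1|/H2] //.
- move=> r y [s [<- [Hin ->]]] m /msuppM_le /allpairsP [[m1 m2] /= [_ H2 ->]].
  have [c [bs [Hsz Hbs Hm2]]] := supp_prod (fun z zs => HJ z (Hin z zs)) H2.
  exists (m1 + c)%MM, bs; split => // i.
  by rewrite !mnmDE Hm2 addnA.
Qed.

Lemma Ilam_supp (K : fieldType) n (lam : 'I_n -> nat) (y : {mpoly K[n]}) :
  Ilam K lam y -> forall m, m \in msupp y -> (wL lam <= wtm lam m)%N.
Proof. by move=> /good_Ilam H m; apply: good_supp. Qed.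

Lemma wL_gt0 n (lam : 'I_n -> nat) : (forall i, 0 < lam i)%N -> (0 < wL lam)%N.
Proof. by move=> h; rewrite /wL prodn_gt0. Qed.

Lemma ww_gt0 n (lam : 'I_n -> nat) i : (forall i, 0 < lam i)%N -> (0 < ww lam i)%N.
Proof. by move=> h; rewrite /ww prodn_cond_gt0. Qed.

Lemma inM_wt n (lam : 'I_n -> nat) (v : vecN n) : (forall i, 0 < lam i)%N ->
  inM lam v <-> (v.2 * wL lam <= wtf lam v.1)%N.
Proof.
move=> h.
have E : (\sum_(i < n) (v.1 i)%:R / (lam i)%:R) * (wL lam)%:R = (wtf lam v.1)%:R :> rat.
  rewrite mulr_suml /wtf natr_sum; apply: eq_bigr => i _.
  rewrite -(lam_ww lam i) !natrM mulrA divfK // pnatr_eq0 -lt0n; exact: h.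
have L0 : (0 : rat) < (wL lam)%:R by rewrite ltr0n wL_gt0.
by rewrite /inM -(ler_pM2r L0) E -natrM ler_nat.
Qed.

Lemma types34 n (v : vecN n) (i j : 'I_n) :
  (val i < val j)%N -> (0 < v.1 i)%N -> (0 < v.1 j)%N -> (0 < v.2)%N -> type3 v \/ type4 v.
Proof.
move=> ij ai aj d0.
have kn : (n.-1 < n)%N by rewrite prednK // (leq_ltn_trans (leq0n _) (ltn_ord j)).
pose k := Ordinal kn.
have jn : (val j < n)%N := ltn_ord j.
case: (eqVneq (val j) n.-1) => [jk|jk].
  by right; split => //; exists i, j; split => //; split => //; rewrite muln_gt0 ai aj.
have jlt : (val j < n.-1)%N by move: jk jn; lia.
case: (eqVneq (v.1 k) 0%N) => [ak|ak].
  left; split; first by exists k.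
  by split => //; exists i, j; split => //; split => //; rewrite muln_gt0 ai aj.
right; split => //; exists i, k; split => //; split; first by rewrite /= (ltn_trans ij jlt).
by rewrite muln_gt0 ai lt0n ak.
Qed.

Definition szv n (v : vecN n) : nat := (\sum_(i < n) v.1 i + v.2)%N.

Lemma szv_add n (u w : vecN n) : szv (vadd u w) = (szv u + szv w)%N.
Proof.
rewrite /szv /vadd /=.
rewrite (eq_bigr (fun i => u.1 i + w.1 i)%N); last by move=> i _; rewrite ffunE.
by rewrite big_split /=; lia.
Qed.

Lemma szv_gt0 n (w : vecN n) : w <> vzero n -> (0 < szv w)%N.
Proof.
move=> wn; rewrite lt0n; apply/negP => /eqP; rewrite /szv => H; apply: wn.
case: w H => a d /= H.
have d0 : d = 0%N by lia.
move: H; rewrite d0 addn0 => s0.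
rewrite /vzero; congr (_, _); apply/ffunP => i; rewrite ffunE.
by apply/eqP; move/eqP: s0; rewrite sum_nat_eq0 => /forallP /(_ i) /implyP; apply.
Qed.

Lemma wtf_single n (lam : 'I_n -> nat) (a : 'I_n -> nat) i :
  (forall j, j != i -> a j = 0%N) -> wtf lam a = (a i * ww lam i)%N.
Proof.
move=> H; rewrite /wtf (bigD1 i) //= big1 ?addn0 //.
by move=> j /H ->.
Qed.

Definition DecV n (lam : 'I_n -> nat) (v : vecN n) :=
  exists (c : {ffun 'I_n -> nat}) (bs : seq {ffun 'I_n -> nat}),
    [/\ size bs = v.2, (forall b, b \in bs -> (wL lam <= wtf lam b)%N) &
        forall i, v.1 i = (c i + \sum_(b <- bs) b i)%N].

Lemma decompV n (lam : 'I_n -> nat) (hlam : forall i, (0 < lam i)%N) :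
  (forall v : vecN n, min_gen lam v -> type3 v \/ type4 v -> v.2 = 1%N) ->
  forall v, inM lam v -> DecV lam v.
Proof.
move=> H v; move: {2}(szv v) (leqnn (szv v)) => N; elim: N v => [|N IH] v Hsz Hv.
  exists v.1, [::]; split => //; last by move=> i; rewrite big_nil addn0.
  by move: Hsz; rewrite /szv; case: (v.2) => //= d; rewrite addnS.
case: (eqVneq v.2 0%N) => [d0|d0].
  by exists v.1, [::]; split => //; move=> i; rewrite big_nil addn0.
have vnz : v <> vzero n by move=> vz; move: d0; rewrite vz eqxx.
case: (classic (min_gen lam v)) => [Hmin|Hnmin]; last first.
  have [u [w [Hu [Hw [un [wn Huw]]]]]] :
    exists u w : vecN n, inM lam u /\ inM lam w /\ u <> vzero n /\
       w <> vzero n /\ v = vadd u w.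
    by apply: NNPP => Hno; apply: Hnmin; split; [exact: Hv | split; [exact: vnz | exact: Hno]].
  have su := szv_gt0 un; have sw := szv_gt0 wn.
  have Hs := szv_add u w; rewrite -Huw in Hs.
  have [cu [bu [Hbu1 Hbu2 Hbu3]]] := IH u ltac:(lia) Hu.
  have [cw [bw [Hbw1 Hbw2 Hbw3]]] := IH w ltac:(lia) Hw.
  exists [ffun i => cu i + cw i]%N, (bu ++ bw); split.
  - by rewrite size_cat Hbu1 Hbw1 Huw.
  - by move=> b; rewrite mem_cat => /orP [/Hbu2|/Hbw2].
  - by move=> i; rewrite Huw /vadd /= !ffunE big_cat /= Hbu3 Hbw3; lia.
case: (eqVneq v.2 1%N) => [d1|d2].
  exists [ffun=> 0%N], [:: v.1]; split => //.
  - by move=> b; rewrite inE => /eqP ->; move/(inM_wt v hlam): Hv; rewrite d1 mul1n.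
  - by move=> i; rewrite big_seq1 ffunE.
exfalso.
have Hwt := proj1 (inM_wt v hlam) Hv.
have Hcl := classic (exists p : 'I_n * 'I_n, [/\ val p.1 < val p.2, 0 < v.1 p.1 & 0 < v.1 p.2]%N).
case: Hcl => [[[i j] /= [ij ai aj]]|Hno].
  by move/eqP: d2; apply; apply: H => //; apply: (types34 ij) => //; rewrite lt0n.
have L0 := wL_gt0 hlam.
have [i ai] : exists i, (0 < v.1 i)%N.
  apply: NNPP => Hn; move: Hwt; rewrite /wtf big1 => [|j _]; last first.
    have : ~ (0 < v.1 j)%N by move=> Hj; apply: Hn; exists j.
    by rewrite lt0n => /negP; rewrite negbK => /eqP ->.
  move: d0; rewrite -lt0n => d0; rewrite leqn0 muln_eq0 => /orP [/eqP|/eqP]; lia.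
have Hz : forall j, j != i -> v.1 j = 0%N.
  move=> j ji; apply/eqP; rewrite -leqn0 leqNgt; apply/negP => aj; apply: Hno.
  have : val i != val j by rewrite eq_sym.
  rewrite neq_ltn => /orP [lij|lji]; first by exists (i, j).
  by exists (j, i).
have Hwi := wtf_single lam Hz; rewrite Hwi -(lam_ww lam i) mulnA in Hwt.
have ww0 := ww_gt0 i hlam.
rewrite leq_pmul2r // in Hwt.
have l0 := hlam i.
move: Hmin => [_ [_ Hmin]]; apply: Hmin.
exists ([ffun j => if j == i then lam i else 0%N], 1%N),
       ([ffun j => if j == i then (v.1 i - lam i)%N else 0%N], v.2.-1).
split.
  apply/(inM_wt _ hlam) => /=; rewrite (@wtf_single _ _ _ i) ?ffunE ?eqxx ?mul1n ?lam_ww //.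
  by move=> j /negbTE ji; rewrite ffunE ji.
split.
  apply/(inM_wt _ hlam) => /=; rewrite (@wtf_single _ _ _ i) ?ffunE ?eqxx; last first.
    by move=> j /negbTE ji; rewrite ffunE ji.
  rewrite -(lam_ww lam i) mulnA leq_pmul2r //.
  move: Hwt d0; rewrite -lt0n => Hwt d0; nia.
split; first by case.
split; first by case=> _ /eqP; move: d0 d2; rewrite -lt0n; lia.
clear Hwi Hno Hsz vnz IH H.
case: v Hv Hwt d0 d2 Hz ai => a d /= Hv Hwt d0 d2 Hz ai.
rewrite /vadd /=; congr (_, _); last by move: d0; rewrite -lt0n; lia.
apply/ffunP => j; rewrite !ffunE; case: eqVneq => [->|ji]; last by rewrite Hz.
move: d0; rewrite -lt0n => d0.
have la : (lam i <= a i)%N by apply: leq_trans Hwt; rewrite leq_pmull.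
by rewrite subnKC.
Qed.

Lemma wtm_sum n (lam : 'I_n -> nat) (bs : seq 'X_{1..n}) :
  (forall b, b \in bs -> (wL lam <= wtm lam b)%N) ->
  (size bs * wL lam <= wtf lam (fun i => \sum_(b <- bs) b i))%N.
Proof.
elim: bs => [|b bs IH] Hb /=; first by rewrite mul0n.
have -> : wtf lam (fun i => \sum_(c <- b :: bs) c i) = wtf lam (fun i => b i + \sum_(c <- bs) c i)%N.
  by rewrite /wtf; apply: eq_bigr => i _; rewrite big_cons.
rewrite wtfD mulSn leq_add //; first by apply: Hb; rewrite inE eqxx.
by apply: IH => c cs; apply: Hb; rewrite inE cs orbT.
Qed.

Lemma gen_ideal_sum_seq (R : comNzRingType) (S : R -> Prop) (I : eqType) (r : seq I) (F : I -> R) :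
  (forall i, i \in r -> gen_ideal S (F i)) -> gen_ideal S (\sum_(i <- r) F i).
Proof.
elim: r => [|i r IH] H; first by rewrite big_nil; apply: gen_ideal0.
rewrite big_cons; apply: gen_idealD; first by apply: H; rewrite inE eqxx.
by apply: IH => j jr; apply: H; rewrite inE jr orbT.
Qed.

Theorem lemma5p3 (K : fieldType) (n : nat) (lam : 'I_n -> nat)
  (hlam : forall i, (0 < lam i)%N) :
  normal_ideal (Ilam K lam) <->
  (forall v : vecN n, min_gen lam v -> type3 v \/ type4 v -> v.2 = 1%N).
Proof.
have L0 := wL_gt0 hlam.
split.
- move=> Hnorm v Hmin Htyp.
  have d0 : (0 < v.2)%N by case: Htyp => [[_ [? _]]|[? _]].
  case: (eqVneq v.2 1%N) => // d1; exfalso.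
  have d2 : (2 <= v.2)%N by move: d0 d1; lia.
  pose m : 'X_{1..n} := [multinom v.1 i | i < n].
  have Hwm : wtm lam m = wtf lam v.1 by rewrite /wtm /wtf; apply: eq_bigr => i _; rewrite mnmE.
  have Hwt := proj1 (inM_wt v hlam) (proj1 Hmin).
  have Hic : int_closure (ideal_pow (Ilam K lam) v.2) 'X_[m].
    apply: (@mono_int_closure K n lam) => //; last by rewrite -Hwm in Hwt.
    by move=> i; apply: gen_Ilam.
  have Hip := Hnorm _ d0 _ Hic.
  have := supp_ideal_pow (@Ilam_supp K n lam) Hip.
  move=> /(_ m); rewrite msuppX inE eqxx => /(_ isT) [c [bs [Hsz Hbs Hm]]].
  case: bs Hsz Hbs Hm => [|b1 [|b2 rest]] //= Hsz Hbs Hm; first by move: d0; rewrite -Hsz.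
    by move: d2; rewrite -Hsz.
  move: Hmin => [_ [_ Hmin]]; apply: Hmin.
  exists ([ffun i => c i + b1 i]%N, 1%N), ([ffun i => \sum_(b <- b2 :: rest) b i]%N, v.2.-1).
  split.
    apply/(inM_wt _ hlam) => /=; rewrite mul1n.
    rewrite (_ : wtf lam _ = wtf lam (fun i => c i + b1 i)%N); last first.
      by rewrite /wtf; apply: eq_bigr => i _; rewrite ffunE.
    rewrite wtfD; apply: leq_trans (leq_addl _ _).
    by apply: Hbs; rewrite inE eqxx.
  split.
    apply/(inM_wt _ hlam) => /=.
    rewrite (_ : wtf lam _ = wtf lam (fun i => \sum_(b <- b2 :: rest) b i)%N); last first.
      by rewrite /wtf; apply: eq_bigr => i _; rewrite ffunE.
    have := @wtm_sum n lam (b2 :: rest).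
    rewrite -Hsz /= => Hw; apply: Hw => b bin; apply: Hbs; rewrite inE bin orbT //.
  split; first by rewrite /vzero => -[].
  split; first by rewrite /vzero => -[] _ /eqP; move: d2; lia.
  have Hm' : forall i, v.1 i = (c i + \sum_(b <- [:: b1, b2 & rest]) b i)%N.
    by move=> i; rewrite -Hm mnmE.
  clear Hm Hwt Hic Hip d1 Hwm m Htyp.
  move: Hm' Hsz; case: v d0 d2 => a d /= d0 d2 Hm Hsz.
  rewrite /vadd /=; congr (_, _); last by rewrite -Hsz.
  apply/ffunP => i; rewrite !ffunE Hm big_cons; lia.
- move=> H k k0 f Hf.
  have Hgk : forall y, ideal_pow (Ilam K lam) k y -> good lam (k * wL lam) y.
    by move=> y; apply: good_ideal_pow => z; apply: good_Ilam.
  have Hgf : good lam (k * wL lam) f.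
    apply: (good_int_closure _ Hf) => i x _; apply: good_ideal_pow => y; exact: Hgk.
  rewrite (mpolyE f); apply: gen_ideal_sum_seq => m Hm.
  rewrite -mul_mpolyC; apply: gen_idealM.
  have Hwm := good_supp Hgf Hm.
  pose v : vecN n := ([ffun i => m i], k).
  have Hv : inM lam v.
    apply/(inM_wt _ hlam) => /=.
    rewrite (_ : wtf lam _ = wtm lam m) //.
    by rewrite /wtf /wtm; apply: eq_bigr => i _; rewrite ffunE.
  have [c [bs [Hsz Hbs Hdec]]] := decompV hlam H Hv.
  pose mc : 'X_{1..n} := [multinom c i | i < n].
  pose mb (b : {ffun 'I_n -> nat}) : 'X_{1..n} := [multinom b i | i < n].
  have -> : m = (mc + \sum_(b <- bs) mb b)%MM.
    apply/mnmP => i; rewrite mnmDE mnm_sumE mnmE.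
    have := Hdec i; rewrite /= ffunE => ->; congr (_ + _)%N.
    by apply: eq_bigr => b _; rewrite mnmE.
  rewrite mpolyXD -mprodXE; apply: gen_idealMl.
  exists (map (fun b => 'X_[mb b]) bs); split; first by rewrite size_map.
  split; last by rewrite big_map.
  move=> x /mapP [b bin ->]; apply: mono_Ilam => //.
  have -> : wtm lam (mb b) = wtf lam b by rewrite /wtm /wtf; apply: eq_bigr => i _; rewrite mnmE.
  exact: Hbs.
Qed.
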